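(* Let $S^0$ be an adequate transversal of a quasi-adequate semigroup $S$. Then $I$ is a left regular subband and $\Lambda$ a right regular subband of $S$, and $E^0$ is a semilattice transversal of both $I$ and $\Lambda$, with $x^0\in V(x)\cap E^0$ for all $x\in I\cup\Lambda$. Moreover, if $x\in E^0$ then $x^0=x$.
   Context: For a semigroup $S$, $S^1$ is $S$ with an identity adjoined, $E(S)$ its idempotents, $V(x)$ the set of inverses of $x$, $\mathcal{L},\mathcal{R}$ Green's relations. $\mathcal{R}^\ast=\{(a,b):\forall x,y\in S^1,\ xa=ya\iff xb=yb\}$, $\mathcal{L}^\ast=\{(a,b):\forall x,y\in S^1,\ ax=ay\iff bx=by\}$. $S$ is abundant if each $\mathcal{R}^\ast$- and $\mathcal{L}^\ast$-class contains an idempotent; adequate if also idempotents commute (then $a^+$, $a^\ast$ are the unique idempotents $\mathcal{R}^\ast$-, resp. $\mathcal{L}^\ast$-related to $a$). Quasi-adequate: abundant with $E(S)$ a subsemigroup. An abundant subsemigroup $U$ of abundant $S$ is a $\ast$-subsemigroup if $\mathcal{L}^\ast(U)=\mathcal{L}^\ast(S)\cap(U\times U)$, $\mathcal{R}^\ast(U)=\mathcal{R}^\ast(S)\cap(U\times U)$. An adequate $\ast$-subsemigroup $S^0$ of abundant $S$ is an adequate transversal if each $x\in S$ has a unique $\overline{x}\in S^0$ and idempotents $e,f$ of $S$ (then unique, written $e_x,f_x$) with $x=e\overline{x}f$, $e\,\mathcal{L}\,\overline{x}^+$, $f\,\mathcal{R}\,\overline{x}^\ast$. $E^0=E(S^0)$,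 $I=\{e_x:x\in S\}$, $\Lambda=\{f_x:x\in S\}$. For regular $x\in S$, $x^0$ is the unique inverse of $x$ with $xx^0=e_x$ and $x^0x=f_x$. A left (right) regular band satisfies $xyx=xy$ ($xyx=yx$). $E^0$ is a semilattice transversal of a band $B$ if $E^0$ is a subsemilattice of $B$ and $|V(x)\cap E^0|=1$ for all $x\in B$. *)

(* Defs.v *)
Set Implicit Arguments.

Section Semigroup.
Variable T : Type.
Variable mul : T -> T -> T.

Definition associative_op : Prop :=
  forall a b c : T, mul a (mul b c) = mul (mul a b) c.

(* S^1 is represented by option T, None being the adjoined identity. *)
Definition lmul1 (x : option T) (a : T) : T :=
  match x with None => a | Some u => mul u a end.
Definition rmul1 (a : T) (x : option T) : T :=
  match x with None => a | Some u => mul a u end.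
Definition in1 (U : T -> Prop) (x : option T) : Prop :=
  match x with None => True | Some u => U u end.

Definition fullset : T -> Prop := fun _ => True.

Definition idempotent (e : T) : Prop := mul e e = e.

Definition greenL (a b : T) : Prop :=
  exists u v : option T, a = lmul1 u b /\ b = lmul1 v a.
Definition greenR (a b : T) : Prop :=
  exists u v : option T, a = rmul1 b u /\ b = rmul1 a v.

(* R* and L* computed inside a subsemigroup U (U = fullset gives those of S) *)
Definition Rstar_in (U : T -> Prop) (a b : T) : Prop :=
  forall x y : option T, in1 U x -> in1 U y ->
    (lmul1 x a = lmul1 y a <-> lmul1 x b = lmul1 y b).
Definition Lstar_in (U : T -> Prop) (a b : T) : Prop :=
  forall x y : option T, in1 U x -> in1 U y ->
    (rmul1 a x = rmul1 a y <-> rmul1 b x = rmul1 b y).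

Definition subsemigroup (U : T -> Prop) : Prop :=
  forall a b, U a -> U b -> U (mul a b).

Definition abundant_in (U : T -> Prop) : Prop :=
  subsemigroup U /\
  forall a, U a ->
    (exists e, U e /\ idempotent e /\ Rstar_in U a e) /\
    (exists f, U f /\ idempotent f /\ Lstar_in U a f).

Definition abundant : Prop := abundant_in fullset.

Definition quasi_adequate : Prop :=
  abundant /\ forall e f, idempotent e -> idempotent f -> idempotent (mul e f).

Definition adequate_in (U : T -> Prop) : Prop :=
  abundant_in U /\
  forall e f, U e -> U f -> idempotent e -> idempotent f -> mul e f = mul f e.

Definition star_subsemigroup (U : T -> Prop) : Prop :=
  abundant_in U /\
  (forall a b, U a -> U b -> (Lstar_in U a b <-> Lstar_in fullset a b)) /\
  (forall a b, U a -> U b -> (Rstar_in U a b <-> Rstar_in fullset a b)).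

Definition is_plus (S0 : T -> Prop) (a p : T) : Prop :=
  S0 p /\ idempotent p /\ Rstar_in S0 a p.
Definition is_star (S0 : T -> Prop) (a p : T) : Prop :=
  S0 p /\ idempotent p /\ Lstar_in S0 a p.

Definition decomp (S0 : T -> Prop) (x xb e f : T) : Prop :=
  S0 xb /\ idempotent e /\ idempotent f /\ x = mul (mul e xb) f /\
  (exists p, is_plus S0 xb p /\ greenL e p) /\
  (exists q, is_star S0 xb q /\ greenR f q).

Definition adequate_transversal (S0 : T -> Prop) : Prop :=
  adequate_in S0 /\ star_subsemigroup S0 /\
  forall x, (exists xb e f, decomp S0 x xb e f) /\
            (forall xb e f xb' e' f', decomp S0 x xb e f ->
                decomp S0 x xb' e' f' -> xb = xb').

Definition E0 (S0 : T -> Prop) (x : T) : Prop := S0 x /\ idempotent x.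
Definition Iset (S0 : T -> Prop) (e : T) : Prop :=
  exists x xb f, decomp S0 x xb e f.
Definition Lambdaset (S0 : T -> Prop) (f : T) : Prop :=
  exists x xb e, decomp S0 x xb e f.

Definition inverse_of (x y : T) : Prop := mul (mul x y) x = x /\ mul (mul y x) y = y.

Definition band (B : T -> Prop) : Prop :=
  subsemigroup B /\ forall x, B x -> idempotent x.
Definition left_regular_band (B : T -> Prop) : Prop :=
  band B /\ forall x y, B x -> B y -> mul (mul x y) x = mul x y.
Definition right_regular_band (B : T -> Prop) : Prop :=
  band B /\ forall x y, B x -> B y -> mul (mul x y) x = mul y x.

Definition semilattice_transversal (E B : T -> Prop) : Prop :=
  (forall x, E x -> B x) /\ subsemigroup E /\
  (forall x, E x -> idempotent x) /\
  (forall x y, E x -> E y -> mul x y = mul y x) /\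
  (forall x, B x -> exists y, (inverse_of x y /\ E y) /\
                  forall z, inverse_of x z /\ E z -> z = y).

Definition is_x0 (S0 : T -> Prop) (x y : T) : Prop :=
  inverse_of x y /\
  forall xb e f, decomp S0 x xb e f -> mul x y = e /\ mul y x = f.

End Semigroup.

(* Main.v *)
Require Import Defs.
From Stdlib Require Import Setoid.
Set Implicit Arguments.

Lemma rw2 (T : Type) (mul : T -> T -> T) (A : associative_op mul) {a b c} :
  mul a b = c -> forall x, mul a (mul b x) = mul c x.
Proof. intros H x. rewrite A, H. reflexivity. Qed.

Lemma rw3 (T : Type) (mul : T -> T -> T) (A : associative_op mul) {a b c d} :
  mul a (mul b c) = d -> forall x, mul a (mul b (mul c x)) = mul d x.
Proof. intros H x. rewrite (A b c x), A, H. reflexivity. Qed.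

Lemma rw4 (T : Type) (mul : T -> T -> T) (A : associative_op mul) {a b c d y} :
  mul a (mul b (mul c d)) = y -> forall x, mul a (mul b (mul c (mul d x))) = mul y x.
Proof. intros H x. rewrite (A c d x), (A b (mul c d) x), A, H. reflexivity. Qed.

Lemma rwi2 (T : Type) (mul : T -> T -> T) (A : associative_op mul) {a b} :
  mul (mul a b) (mul a b) = mul a b -> forall x, mul a (mul b (mul a (mul b x))) = mul a (mul b x).
Proof. intros H x. rewrite (A a b (mul a (mul b x))), (A a b x), A, H. reflexivity. Qed.

Lemma rwi2e (T : Type) (mul : T -> T -> T) (A : associative_op mul) {a b} :
  mul (mul a b) (mul a b) = mul a b -> mul a (mul b (mul a b)) = mul a b.
Proof. intros H. rewrite (A a b (mul a b)). exact H. Qed.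

Ltac nrm A := repeat rewrite <- A.
Ltac nrmh A H := repeat rewrite <- A in H.
Ltac use A H := nrm A; repeat (rewrite H || rewrite (rw2 A H) || rewrite (rw3 A H) || rewrite (rw4 A H)); nrm A.

Lemma greenL_idem (T : Type) (mul : T -> T -> T) (A : associative_op mul) e P :
  idempotent mul e -> idempotent mul P -> greenL mul e P -> mul e P = e /\ mul P e = P.
Proof.
  unfold idempotent. intros He HP [u [v [H1 H2]]]. split.
  - destruct u as [w|]; simpl in H1; subst e; [rewrite <- A, HP|]; auto.
  - destruct v as [w|]; simpl in H2; rewrite H2 at 1; [rewrite <- A, He|]; auto; rewrite He; auto.
Qed.

Lemma greenR_idem (T : Type) (mul : T -> T -> T) (A : associative_op mul) f Q :
  idempotent mul f -> idempotent mul Q -> greenR mul f Q -> mul Q f = f /\ mul f Q = Q.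
Proof.
  unfold idempotent. intros Hf HQ [u [v [H1 H2]]]. split.
  - destruct u as [w|]; simpl in H1; subst f; [rewrite A, HQ|]; auto.
  - destruct v as [w|]; simpl in H2; rewrite H2 at 1; [rewrite A, Hf|]; auto; rewrite ?Hf; congruence.
Qed.

Lemma plus_eq (T : Type) (mul : T -> T -> T) (S0 : T -> Prop)
  (HC : forall e f, S0 e -> S0 f -> idempotent mul e -> idempotent mul f -> mul e f = mul f e)
  p P : S0 p -> idempotent mul p -> is_plus mul S0 p P -> P = p.
Proof.
  intros Sp Ip [SP [IP R]].
  assert (H1 : mul p P = P) by (apply (R (Some p) None Sp I); exact Ip).
  assert (H2 : mul P p = p) by (apply (R (Some P) None SP I); exact IP).
  rewrite <- H1, HC, H2; auto.
Qed.

Lemma star_eq (T : Type) (mul : T -> T -> T) (S0 : T -> Prop)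
  (HC : forall e f, S0 e -> S0 f -> idempotent mul e -> idempotent mul f -> mul e f = mul f e)
  p Q : S0 p -> idempotent mul p -> is_star mul S0 p Q -> Q = p.
Proof.
  intros Sp Ip [SQ [IQ R]].
  assert (H1 : mul Q p = Q) by (apply (R (Some p) None Sp I); exact Ip).
  assert (H2 : mul p Q = p) by (apply (R (Some Q) None SQ I); exact IQ).
  rewrite <- H1, <- HC, H2; auto.
Qed.

Lemma mk_decomp (T : Type) (mul : T -> T -> T) (S0 : T -> Prop) x t e f :
  S0 t -> idempotent mul t -> idempotent mul e -> idempotent mul f ->
  x = mul (mul e t) f -> mul e t = e -> mul t e = t -> mul t f = f -> mul f t = t ->
  decomp mul S0 x t e f.
Proof.
  intros St It Ie If Hx H1 H2 H3 H4.
  split; [auto|split; [auto|split; [auto|split; [auto|split]]]].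
  - exists t. split. split; [auto|split; [auto|]]. intros u v _ _; tauto.
    exists (Some e), (Some t); simpl; auto.
  - exists t. split. split; [auto|split; [auto|]]. intros u v _ _; tauto.
    exists (Some f), (Some t); simpl; auto.
Qed.

Theorem lemma2p3 (T : Type) (mul : T -> T -> T) (S0 : T -> Prop)
  (Hassoc : associative_op mul)
  (HS : quasi_adequate mul)
  (HS0 : adequate_transversal mul S0) :
  left_regular_band mul (Iset mul S0) /\
  right_regular_band mul (Lambdaset mul S0) /\
  semilattice_transversal mul (E0 mul S0) (Iset mul S0) /\
  semilattice_transversal mul (E0 mul S0) (Lambdaset mul S0) /\
  (forall x, Iset mul S0 x \/ Lambdaset mul S0 x ->
     exists y, (is_x0 mul S0 x y /\ E0 mul S0 y) /\
               forall z, is_x0 mul S0 x z -> z = y) /\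
  (forall x, E0 mul S0 x -> forall y, is_x0 mul S0 x y -> y = x) /\
  (forall x, E0 mul S0 x -> is_x0 mul S0 x x).
Proof.
  pose proof Hassoc as A.
  destruct HS as [_ HQ].
  destruct HS0 as [[[HSS _] HC] [[_ [HLs HRs]] Htr]].
  assert (Huniq : forall x xb e f xb' e' f', decomp mul S0 x xb e f ->
            decomp mul S0 x xb' e' f' -> xb = xb') by (intro x; apply (Htr x)).
  assert (Hex : forall x, exists xb e f, decomp mul S0 x xb e f) by (intro x; apply (Htr x)).
  clear Htr.
  assert (E0mul : forall p q, E0 mul S0 p -> E0 mul S0 q -> E0 mul S0 (mul p q)).
  { intros p q [Sp Ip] [Sq Iq]. split; auto. }
  assert (Ecomm : forall p q, E0 mul S0 p -> E0 mul S0 q -> mul p q = mul q p).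
  { intros p q [Sp Ip] [Sq Iq]. auto. }
  assert (Ichar : forall e, Iset mul S0 e <-> exists p, E0 mul S0 p /\ idempotent mul e /\ mul e p = e /\ mul p e = p).
  { intro e. split.
    - intros [x [xb [f [Sxb [Ie [If [Hx [[P [[SP [IP RP]] GL]] _]]]]]]]].
      exists P. destruct (greenL_idem A Ie IP GL). repeat split; auto.
    - intros [p [[Sp Ip] [Ie [H1 H2]]]]. exists (mul (mul e p) p), p, p.
      apply mk_decomp; auto. }
  assert (Lchar : forall f, Lambdaset mul S0 f <-> exists q, E0 mul S0 q /\ idempotent mul f /\ mul q f = f /\ mul f q = q).
  { intro f. split.
    - intros [x [xb [e [Sxb [Ie [If [Hx [_ [Q [[SQ [IQ RQ]] GR]]]]]]]]]].
      exists Q. destruct (greenR_idem A If IQ GR). repeat split; auto.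
    - intros [q [[Sq Iq] [If [H1 H2]]]]. exists (mul (mul q q) f), q, q.
      apply mk_decomp; auto. }
  assert (invU : forall x t t', E0 mul S0 t -> inverse_of mul x t -> E0 mul S0 t' -> inverse_of mul x t' -> t = t').
  { assert (D : forall x t, E0 mul S0 t -> inverse_of mul x t -> decomp mul S0 x t (mul x t) (mul t x)).
    { intros x t [St It] [H1 H2]. unfold idempotent in It. pose proof H1 as H1n; pose proof H2 as H2n; nrmh A H1n; nrmh A H2n.
      apply mk_decomp; auto; unfold idempotent.
      1: rewrite A, H1; auto.
      1: rewrite A, H2; auto.
      all: use A It; use A H1n; use A H2n; reflexivity. }
    intros x t t' Ht It Ht' It'. exact (Huniq _ _ _ _ _ _ _ (D _ _ Ht It) (D _ _ Ht' It')). }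
  assert (idemInv : forall g, idempotent mul g -> exists t, E0 mul S0 t /\ inverse_of mul g t).
  { intros g Ig.
    destruct (Hex g) as [b [e [f [Sb [Ie [If [Hg [[P [[SP [IP RP]] GL]] [Q [[SQ [IQ LQ]] GR]]]]]]]]]].
    destruct (greenL_idem A Ie IP GL) as [eP Pe]. destruct (greenR_idem A If IQ GR) as [Qf fQ].
    assert (Pb : mul P b = b) by (apply (RP (Some P) None SP I); exact IP).
    assert (bQ : mul b Q = b) by (apply (LQ (Some Q) None SQ I); exact IQ).
    pose proof RP as RPf. pose proof LQ as LQf.
    apply HRs in RPf; auto. apply HLs in LQf; auto.
    assert (Ih : idempotent mul (mul f e)) by (apply HQ; auto).
    unfold idempotent in *.
    assert (bhb : mul b (mul (mul f e) b) = b).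
    { assert (E1 : mul P (mul g Q) = b).
      { rewrite Hg. use A Pe. use A fQ. use A bQ. use A Pb. reflexivity. }
      assert (E2 : mul P (mul g (mul g Q)) = mul b (mul (mul f e) b)).
      { rewrite Hg. use A fQ. use A bQ. use A Pe. use A Pb. reflexivity. }
      rewrite (rw2 A Ig), E1 in E2. symmetry. exact E2. }
    assert (bh : mul b (mul f e) = P).
    { assert (H : mul (mul b (mul f e)) P = P).
      { apply (proj1 (RPf (Some (mul b (mul f e))) None I I)). simpl. rewrite <- A. exact bhb. }
      rewrite <- H at 1. use A eP. reflexivity. }
    assert (hb : mul (mul f e) b = Q).
    { assert (H : mul Q (mul (mul f e) b) = Q).
      { apply (proj1 (LQf (Some (mul (mul f e) b)) None I I)). simpl. exact bhb. }
      rewrite <- H at 1. use A Qf. reflexivity. }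
    assert (bPQ : b = mul P Q).
    { rewrite <- bh, <- hb. rewrite (A (mul b (mul f e))), <- (A b (mul f e) (mul f e)), Ih. rewrite <- A. exact (eq_sym bhb). }
    assert (Ib : mul b b = b).
    { rewrite bPQ. rewrite <- A, (A Q P Q), (HC Q P SQ SP IQ IP), <- (A P Q Q), IQ, A, IP. reflexivity. }
    assert (PeqB : P = b). { apply (plus_eq HC Sb Ib). split; [auto|split; auto]. }
    assert (QeqB : Q = b). { apply (star_eq HC Sb Ib). split; [auto|split; auto]. }
    clear bh hb bPQ RPf LQf. subst P Q. exists b. split; [split; auto|].
    split; rewrite Hg; do 4 (use A Ib; use A If; use A Ie; use A eP; use A Pe; use A Qf; use A fQ); reflexivity. }
  assert (Iclos : forall e f p q, E0 mul S0 p -> E0 mul S0 q -> idempotent mul e -> idempotent mul f ->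
     mul e p = e -> mul p e = p -> mul f q = f -> mul q f = q ->
     mul (mul e f) (mul p q) = mul e f /\ mul (mul p q) (mul e f) = mul p q).
  { intros e f p q Ep Eq Ie If ep pe fq qf.
    destruct (idemInv (mul e f) (HQ e f Ie If)) as [r [Er [H1 H2]]].
    pose proof H1 as H1n; pose proof H2 as H2n; nrmh A H1n; nrmh A H2n.
    assert (Ir := proj2 Er). assert (Ip := proj2 Ep). assert (Iq := proj2 Eq).
    unfold idempotent in *.
    assert (rq : mul r q = r).
    { rewrite <- H2n at 1. nrm A. rewrite (Ecomm r q Er Eq). use A fq. exact H2n. }
    assert (rer : mul r (mul e r) = r).
    { rewrite <- H2n at 2. rewrite (rwi2 A (HQ r e Ir Ie)). exact H2n. }
    assert (rp : mul r p = r).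
    { rewrite <- rer at 1. nrm A. rewrite (Ecomm r p Er Ep). use A ep. exact rer. }
    assert (pqa : mul (mul p q) (mul e f) = mul p q).
    { nrm A. rewrite (A p q), (Ecomm p q Ep Eq), <- A. use A pe.
      rewrite A, <- (Ecomm p q Ep Eq), <- A. use A qf. reflexivity. }
    assert (X : mul (mul p q) (mul r (mul e f)) = mul p q).
    { rewrite <- pqa at 2. rewrite <- H1 at 2. pose proof pqa as pqan. nrmh A pqan. use A pqan. reflexivity. }
    assert (Y : mul r (mul p q) = mul p q).
    { rewrite (A (mul p q) r), (Ecomm (mul p q) r (E0mul p q Ep Eq) Er), <- A, pqa in X. exact X. }
    assert (req : r = mul p q).
    { rewrite <- Y. rewrite A, rp, rq. reflexivity. }
    assert (ra : mul r (mul e f) = r) by (rewrite req at 1 2; exact pqa).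
    split; [|exact pqa].
    rewrite <- req. rewrite <- ra at 1. rewrite A. exact H1. }
  assert (Lclos : forall f1 f2 q1 q2, E0 mul S0 q1 -> E0 mul S0 q2 -> idempotent mul f1 -> idempotent mul f2 ->
     mul q1 f1 = f1 -> mul f1 q1 = q1 -> mul q2 f2 = f2 -> mul f2 q2 = q2 ->
     mul (mul q1 q2) (mul f1 f2) = mul f1 f2 /\ mul (mul f1 f2) (mul q1 q2) = mul q1 q2).
  { intros f1 f2 q1 q2 Eq1 Eq2 If1 If2 q1f1 f1q1 q2f2 f2q2.
    destruct (idemInv (mul f1 f2) (HQ f1 f2 If1 If2)) as [r [Er [H1 H2]]].
    pose proof H1 as H1n; pose proof H2 as H2n; nrmh A H1n; nrmh A H2n.
    assert (Ir := proj2 Er). assert (Iq1 := proj2 Eq1). assert (Iq2 := proj2 Eq2).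
    unfold idempotent in *.
    assert (rf2r : mul r (mul f2 r) = r).
    { rewrite <- H2n at 1. nrm A. rewrite (rwi2e A (HQ f2 r If2 Ir)). exact H2n. }
    assert (q2r : mul q2 r = r).
    { rewrite <- rf2r at 1. rewrite A, (Ecomm q2 r Eq2 Er), <- A. use A q2f2. exact rf2r. }
    assert (aqq : mul (mul f1 f2) (mul q1 q2) = mul q1 q2).
    { rewrite (Ecomm q1 q2 Eq1 Eq2) at 1. nrm A. use A f2q2. rewrite <- (Ecomm q1 q2 Eq1 Eq2).
      rewrite A, f1q1. reflexivity. }
    assert (X : mul (mul f1 f2) (mul r (mul q1 q2)) = mul q1 q2).
    { rewrite <- aqq at 2. rewrite <- H1 at 2. pose proof aqq as aqqn. nrmh A aqqn. use A aqqn. reflexivity. }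
    rewrite (Ecomm r (mul q1 q2) Er (E0mul q1 q2 Eq1 Eq2)), A, aqq in X.
    assert (req : r = mul q1 q2).
    { rewrite <- X. rewrite <- A, q2r.
      assert (q1r : mul q1 r = r).
      { rewrite <- H2n at 1. rewrite A, (Ecomm q1 r Eq1 Er), <- A. use A q1f1. exact H2n. }
      rewrite q1r. reflexivity. }
    assert (ar : mul (mul f1 f2) r = r) by (rewrite req at 1 2; exact aqq).
    split; [|exact aqq].
    rewrite <- req. rewrite <- ar at 1. exact H1. }
  assert (x0uniq : forall x y z, is_x0 mul S0 x y -> is_x0 mul S0 x z -> z = y).
  { intros x y z [[Hy1 Hy2] Hy] [[Hz1 Hz2] Hz].
    destruct (Hex x) as [xb [e [f D]]].
    destruct (Hy _ _ _ D) as [xy yx]. destruct (Hz _ _ _ D) as [xz zx].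
    rewrite <- Hz2 at 1. rewrite zx, <- yx, <- A, xz, <- xy, A. exact Hy2. }
  assert (x0I : forall x p, E0 mul S0 p -> idempotent mul x -> mul x p = x -> mul p x = p -> is_x0 mul S0 x p).
  { intros x p Ep Ix xp px. pose proof (proj2 Ep) as Ip. unfold idempotent in *.
    split. { split. rewrite xp; exact Ix. rewrite px; exact Ip. }
    intros xb e f D.
    assert (xbp : xb = p).
    { apply (Huniq x xb e f p x p D). destruct Ep. apply mk_decomp; auto. rewrite xp, xp. reflexivity. }
    subst xb.
    destruct D as [_ [Ie [If [Hx [[P [HP GL]] [Q [HQ' GR]]]]]]].
    assert (P = p) by (destruct Ep; apply (plus_eq HC); auto). subst P.
    assert (Q = p) by (destruct Ep; apply (star_eq HC); auto). subst Q.
    destruct (greenL_idem A Ie Ip GL) as [ep pe]. destruct (greenR_idem A If Ip GR) as [pf fp].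
    assert (fpe : f = p).
    { rewrite <- px at 1. rewrite Hx. use A pe. use A Ip. rewrite pf. reflexivity. }
    subst f. split; [|exact px].
    rewrite xp, Hx at 1. rewrite !ep. reflexivity. }
  assert (x0L : forall x q, E0 mul S0 q -> idempotent mul x -> mul q x = x -> mul x q = q -> is_x0 mul S0 x q).
  { intros x q Eq Ix qx xq. pose proof (proj2 Eq) as Iq. unfold idempotent in *.
    split. { split. rewrite xq; exact qx. rewrite qx; exact xq. }
    intros xb e f D.
    assert (xbq : xb = q).
    { apply (Huniq x xb e f q q x D). destruct Eq. apply mk_decomp; auto. rewrite Iq, qx. reflexivity. }
    subst xb.
    destruct D as [_ [Ie [If [Hx [[P [HP GL]] [Q [HQ' GR]]]]]]].
    assert (P = q) by (destruct Eq; apply (plus_eq HC); auto). subst P.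
    assert (Q = q) by (destruct Eq; apply (star_eq HC); auto). subst Q.
    destruct (greenL_idem A Ie Iq GL) as [eq qe]. destruct (greenR_idem A If Iq GR) as [qf fq].
    assert (eqe : e = q).
    { rewrite <- xq. rewrite Hx. use A fq. use A Iq. rewrite eq. reflexivity. }
    subst e. split; [exact xq|].
    rewrite qx, Hx at 1. rewrite Iq, qf. reflexivity. }
  split; [|split; [|split; [|split; [|split; [|split]]]]].
  -
    split; [split|].
    + intros e f He Hf. apply Ichar in He as [p [Ep [Ie [ep pe]]]]. apply Ichar in Hf as [q [Eq [If [fq qf]]]].
      apply Ichar. exists (mul p q). destruct (Iclos e f p q Ep Eq Ie If ep pe fq qf).
      split; [apply E0mul; auto|split; [apply HQ; auto|split; auto]].
    + intros e He. apply Ichar in He as [p [_ [Ie _]]]. exact Ie.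
    + intros e f He Hf. apply Ichar in He as [p [Ep [Ie [ep pe]]]]. apply Ichar in Hf as [q [Eq [If [fq qf]]]].
      destruct (Iclos e f p q Ep Eq Ie If ep pe fq qf) as [efs sef].
      assert (Ief : idempotent mul (mul e f)) by (apply HQ; auto).
      destruct (Iclos (mul e f) e (mul p q) p (E0mul p q Ep Eq) Ep Ief Ie efs sef ep pe) as [xs sx].
      assert (spq : mul (mul p q) p = mul p q).
      { rewrite <- A, (Ecomm q p Eq Ep), A, (proj2 Ep). reflexivity. }
      rewrite spq in xs, sx.
      set (s := mul p q) in *. set (x := mul (mul e f) e) in *.
      assert (E : x = mul (mul x s) (mul e f)) by (rewrite <- A, sef, xs; reflexivity).
      rewrite xs in E. rewrite E. unfold x. unfold idempotent in *. nrm A. use A Ie.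
      rewrite (rwi2e A Ief). reflexivity.
  -
    split; [split|].
    + intros e f He Hf. apply Lchar in He as [p [Ep [Ie [pe ep]]]]. apply Lchar in Hf as [q [Eq [If [qf fq]]]].
      apply Lchar. exists (mul p q). destruct (Lclos e f p q Ep Eq Ie If pe ep qf fq).
      split; [apply E0mul; auto|split; [apply HQ; auto|split; auto]].
    + intros e He. apply Lchar in He as [p [_ [Ie _]]]. exact Ie.
    + intros f1 f2 H1 H2. apply Lchar in H1 as [q1 [Eq1 [If1 [q1f1 f1q1]]]]. apply Lchar in H2 as [q2 [Eq2 [If2 [q2f2 f2q2]]]].
      destruct (Lclos f2 f1 q2 q1 Eq2 Eq1 If2 If1 q2f2 f2q2 q1f1 f1q1) as [sy ys].
      assert (Iy : idempotent mul (mul f2 f1)) by (apply HQ; auto).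
      destruct (Lclos f1 (mul f2 f1) q1 (mul q2 q1) Eq1 (E0mul q2 q1 Eq2 Eq1) If1 Iy q1f1 f1q1 sy ys) as [sx xs].
      assert (spq : mul q1 (mul q2 q1) = mul q2 q1).
      { rewrite A, (Ecomm q1 q2 Eq1 Eq2), <- A, (proj2 Eq1). reflexivity. }
      rewrite spq in sx, xs. rewrite <- A.
      set (s := mul q2 q1) in *. set (x := mul f1 (mul f2 f1)) in *. set (y := mul f2 f1) in *.
      rewrite <- sx, <- ys, <- A, sx. unfold x, y. unfold idempotent in *. nrm A. use A If1.
      rewrite (rwi2e A Iy). reflexivity.
  -
    split; [|split; [|split; [|split]]].
    + intros x Ex. apply Ichar. exists x. destruct Ex as [Sx Ix]. repeat split; auto.
    + intros p q Ep Eq. apply E0mul; auto.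
    + intros p Ep. exact (proj2 Ep).
    + exact Ecomm.
    + intros x Hx. apply Ichar in Hx as [p [Ep [Ix [xp px]]]]. exists p. split.
      * split; [|exact Ep]. split. rewrite xp; exact Ix. rewrite px; exact (proj2 Ep).
      * intros z [Hz Ez]. apply (invU x z p Ez Hz Ep). split. rewrite xp; exact Ix. rewrite px; exact (proj2 Ep).
  -
    split; [|split; [|split; [|split]]].
    + intros x Ex. apply Lchar. exists x. destruct Ex as [Sx Ix]. repeat split; auto.
    + intros p q Ep Eq. apply E0mul; auto.
    + intros p Ep. exact (proj2 Ep).
    + exact Ecomm.
    + intros x Hx. apply Lchar in Hx as [q [Eq [Ix [qx xq]]]]. exists q. split.
      * split; [|exact Eq]. split. rewrite xq; exact qx. rewrite qx; exact xq.
      * intros z [Hz Ez]. apply (invU x z q Ez Hz Eq). split. rewrite xq; exact qx. rewrite qx; exact xq.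
  - intros x [Hx|Hx].
    + apply Ichar in Hx as [p [Ep [Ix [xp px]]]]. exists p. split; [split; auto|].
      intros z Hz. exact (x0uniq x p z (x0I x p Ep Ix xp px) Hz).
    + apply Lchar in Hx as [q [Eq [Ix [qx xq]]]]. exists q. split; [split; auto|].
      intros z Hz. exact (x0uniq x q z (x0L x q Eq Ix qx xq) Hz).
  - intros x Ex y Hy. destruct Ex as [Sx Ix].
    exact (x0uniq x x y (x0I x x (conj Sx Ix) Ix Ix Ix) Hy).
  - intros x [Sx Ix]. exact (x0I x x (conj Sx Ix) Ix Ix Ix).
Qed.
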